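(* Let $\mathbb{X}$ be a uniformly smooth Banach space and $\delta>0$. Suppose $V\subset\mathbb{X}$ is a $\delta$-separated set with $\#V\geq2$ and there exist a line $L$ and a number $0\leq\alpha\leq43/1224$ such that $\mathrm{dist}(x,L)\leq\alpha\delta$ for all $x\in V$. Then for all $v_1,v_2\in V$, $$|\Pi_L(v_1)-\Pi_L(v_2)|\leq|v_1-v_2|\leq\bigl(1+\rho_{\mathbb{X}}(102\alpha)\bigr)|\Pi_L(v_1)-\Pi_L(v_2)|.$$
   Context: All Banach spaces are real; a line is a one-dimensional affine subspace. $V$ is $\delta$-separated if $|v-w|\geq\delta$ for distinct $v,w\in V$. The modulus of smoothness is $\rho_{\mathbb{X}}(t)=\sup_{|x|=1,|y|=t}\tfrac12(|x+y|+|x-y|)-1$; $\mathbb{X}$ is uniformly smooth if $\rho_{\mathbb{X}}(t)/t\to0$ as $t\to0$. In a uniformly smooth space the normalized duality mapping $J:\mathbb{X}\to\mathbb{X}^*$ (with $|J(x)|_{\mathbb{X}^*}=|x|$, $\langle J(x),x\rangle=|x|^2$) is unique. For a one-dimensional linear subspace $L$, the $J$-projection is $\Pi_L(x)=\langle J(v),x\rangle v$ with $v\in L$, $|v|=1$; for an affine line $L$ and $q\in L$, $\Pi_L(x)=q+\Pi_{L-q}(x-q)$. *)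

(* Defs.v *)
From Stdlib Require Import Reals Lra ClassicalEpsilon.
Open Scope R_scope.

Record Banach := {
  car :> Type;
  vadd : car -> car -> car;
  vzero : car;
  vopp : car -> car;
  vscal : R -> car -> car;
  vnorm : car -> R;
  vaddA : forall x y z, vadd x (vadd y z) = vadd (vadd x y) z;
  vaddC : forall x y, vadd x y = vadd y x;
  vadd0 : forall x, vadd x vzero = x;
  vaddN : forall x, vadd x (vopp x) = vzero;
  vscalA : forall a b x, vscal a (vscal b x) = vscal (a * b) x;
  vscal1 : forall x, vscal 1 x = x;
  vscalDr : forall a x y, vscal a (vadd x y) = vadd (vscal a x) (vscal a y);
  vscalDl : forall a b x, vscal (a + b) x = vadd (vscal a x) (vscal b x);
  vnorm_ge0 : forall x, 0 <= vnorm x;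
  vnorm_eq0 : forall x, vnorm x = 0 -> x = vzero;
  vnorm_scal : forall a x, vnorm (vscal a x) = Rabs a * vnorm x;
  vnorm_triangle : forall x y, vnorm (vadd x y) <= vnorm x + vnorm y;
  vcomplete : forall u : nat -> car,
    (forall eps, eps > 0 -> exists N, forall n m, (n >= N)%nat -> (m >= N)%nat ->
        vnorm (vadd (u n) (vopp (u m))) < eps) ->
    exists l, forall eps, eps > 0 -> exists N, forall n, (n >= N)%nat ->
        vnorm (vadd (u n) (vopp l)) < eps
}.

Arguments vadd {_}. Arguments vzero {_}. Arguments vopp {_}.
Arguments vscal {_}. Arguments vnorm {_}.

Definition vsub {X : Banach} (x y : X) : X := vadd x (vopp y).

(* Supremum of a set of reals (the least upper bound, chosen classically;
   meaningful when the set is nonempty and bounded above). *)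
Definition Rsup (E : R -> Prop) : R := epsilon (inhabits 0) (fun r => is_lub E r).
Definition Rinf (E : R -> Prop) : R := - Rsup (fun s => E (- s)).

Definition rho_set (X : Banach) (t : R) : R -> Prop :=
  fun s => exists x y : X, vnorm x = 1 /\ vnorm y = t /\
     s = (vnorm (vadd x y) + vnorm (vsub x y)) / 2 - 1.
Definition rho (X : Banach) (t : R) : R := Rsup (rho_set X t).

Definition uniformly_smooth (X : Banach) : Prop :=
  forall eps, eps > 0 -> exists d, d > 0 /\
    forall t, 0 < t < d -> Rabs (rho X t / t) < eps.

Definition linear_functional {X : Banach} (f : X -> R) : Prop :=
  (forall x y, f (vadd x y) = f x + f y) /\ (forall a x, f (vscal a x) = a * f x).
Definition bounded_functional {X : Banach} (f : X -> R) : Prop :=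
  exists C, forall x, Rabs (f x) <= C * vnorm x.
Definition dual_norm {X : Banach} (f : X -> R) : R :=
  Rsup (fun s => exists x : X, vnorm x <= 1 /\ s = Rabs (f x)).

Definition is_duality_value {X : Banach} (x : X) (f : X -> R) : Prop :=
  linear_functional f /\ bounded_functional f /\
  dual_norm f = vnorm x /\ f x = vnorm x ^ 2.

Definition is_line {X : Banach} (L : X -> Prop) : Prop :=
  exists (q w : X), w <> vzero /\
    forall x, L x <-> exists t : R, x = vadd q (vscal t w).

Definition distL {X : Banach} (x : X) (L : X -> Prop) : R :=
  Rinf (fun s => exists y, L y /\ s = vnorm (vsub x y)).

Definition separated {X : Banach} (delta : R) (V : X -> Prop) : Prop :=
  forall v w, V v -> V w -> v <> w -> vnorm (vsub v w) >= delta.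

(* J-projection onto the affine line through q with unit direction v,
   where f = J(v):  Pi(x) = q + <J(v), x - q> v. *)
Definition Jproj {X : Banach} (q v : X) (f : X -> R) (x : X) : X :=
  vadd q (vscal (f (vsub x q)) v).

(* Main.v *)
Require Import Defs.
From Stdlib Require Import Reals Lra ClassicalEpsilon Classical.
Open Scope R_scope.

From Stdlib Require Import Reals.
Lemma vaddK {X : Banach} (a b : X) : vadd (vadd a b) (vopp a) = b.
Proof. rewrite (vaddC _ a b), <- vaddA, vaddN, vadd0. reflexivity. Qed.

Lemma vadd_cancel {X : Banach} (a b c : X) : vadd a b = vadd a c -> b = c.
Proof. intro H. rewrite <- (vaddK a b), H, vaddK. reflexivity. Qed.

Lemma vadd0l {X : Banach} (x : X) : vadd vzero x = x.
Proof. rewrite vaddC, vadd0. reflexivity. Qed.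

Lemma scal0 {X : Banach} (x : X) : vscal 0 x = vzero.
Proof.
  assert (H : vscal 0 x = vadd (vscal 0 x) (vscal 0 x)).
  { rewrite <- vscalDl. f_equal. lra. }
  apply (vadd_cancel (vscal 0 x)). rewrite <- H, vadd0. reflexivity.
Qed.

Lemma opp_scal {X : Banach} (x : X) : vopp x = vscal (-1) x.
Proof.
  apply (vadd_cancel x). rewrite vaddN.
  rewrite <- (vscal1 _ x) at 1. rewrite <- vscalDl.
  replace (1 + -1) with 0 by lra. rewrite scal0. reflexivity.
Qed.

Lemma scal_zero {X : Banach} (a : R) : vscal a (@vzero X) = vzero.
Proof. rewrite <- (scal0 vzero), vscalA, Rmult_0_r. reflexivity. Qed.

Lemma norm0 {X : Banach} : vnorm (@vzero X) = 0.
Proof. rewrite <- (scal0 vzero), vnorm_scal, Rabs_R0. ring. Qed.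

Lemma norm_opp {X : Banach} (x : X) : vnorm (vopp x) = vnorm x.
Proof. rewrite opp_scal, vnorm_scal. replace (-1) with (-(1)) by ring. rewrite Rabs_Ropp, Rabs_R1. ring. Qed.

Lemma vadd_swap {X : Banach} (a b c d : X) :
  vadd (vadd a b) (vadd c d) = vadd (vadd a c) (vadd b d).
Proof.
  rewrite <- !vaddA. f_equal. rewrite !vaddA. f_equal. apply vaddC.
Qed.

Lemma opp_add {X : Banach} (a b : X) : vopp (vadd a b) = vadd (vopp a) (vopp b).
Proof. rewrite !opp_scal. apply vscalDr. Qed.

Lemma G1 {X : Banach} (a b c : X) :
  vadd (vadd a b) (vopp (vadd a c)) = vadd b (vopp c).
Proof. rewrite opp_add, vadd_swap, vaddN, vadd0l. reflexivity. Qed.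

Lemma I1 {X : Banach} (x v : X) : vadd v (vsub x v) = x.
Proof. unfold vsub. rewrite (vaddC _ x), vaddA, vaddN, vadd0l. reflexivity. Qed.

Lemma I2 {X : Banach} (a b : X) l :
  vadd a (vscal l b) = vadd (vscal (1-l) a) (vscal l (vadd a b)).
Proof.
  rewrite vscalDr, vaddA, <- vscalDl. replace (1 - l + l) with 1 by ring.
  rewrite vscal1. reflexivity.
Qed.

Lemma I4 {X : Banach} (w u : X) : w = vadd (vsub w u) u.
Proof. unfold vsub. rewrite <- vaddA, (vaddC _ (vopp u)), vaddN, vadd0. reflexivity. Qed.

Lemma sub_scal {X : Banach} (a b : R) (v : X) :
  vsub (vscal a v) (vscal b v) = vscal (a - b) v.
Proof. unfold vsub. rewrite opp_scal, vscalA, <- vscalDl. f_equal; ring. Qed.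

Lemma norm_sub_le {X : Banach} (a b : X) : vnorm (vsub a b) <= vnorm a + vnorm b.
Proof. unfold vsub. rewrite <- (norm_opp b). apply vnorm_triangle. Qed.

Lemma lf0 {X : Banach} (f : X -> R) : linear_functional f -> f vzero = 0.
Proof. intros [_ H]. rewrite <- (scal0 vzero), H. ring. Qed.

Lemma lf_opp {X : Banach} (f : X -> R) x : linear_functional f -> f (vopp x) = - f x.
Proof. intros [_ H]. rewrite opp_scal, H. ring. Qed.

Lemma lf_sub {X : Banach} (f : X -> R) x y : linear_functional f -> f (vsub x y) = f x - f y.
Proof. intros Hf. unfold vsub. destruct Hf as [Ha Hs]. rewrite Ha, lf_opp by (split; auto). ring. Qed.

Lemma Rsup_lub (E : R -> Prop) : (exists x, E x) -> bound E -> is_lub E (Rsup E).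
Proof.
  intros Hne Hb. unfold Rsup. apply epsilon_spec.
  destruct (completeness E Hb Hne) as [m Hm]. exists m; exact Hm.
Qed.

Lemma dual_bound {X : Banach} (v : X) f : vnorm v = 1 -> is_duality_value v f ->
  forall z, Rabs (f z) <= vnorm z.
Proof.
  intros Hv1 [Hl [[C HC] [Hd Hv]]].
  set (S := fun s => exists x : X, vnorm x <= 1 /\ s = Rabs (f x)).
  assert (Hlub : is_lub S (dual_norm f)).
  { apply Rsup_lub.
    - exists (Rabs (f vzero)). exists vzero. rewrite norm0. split; [lra|reflexivity].
    - exists (Rabs C). intros s [x [Hx ->]].
      specialize (HC x). pose proof (vnorm_ge0 _ x).
      assert (C * vnorm x <= Rabs C).
      { destruct (Rle_dec 0 C).
        - rewrite Rabs_right by lra. nra.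
        - pose proof (Rabs_pos C). nra. }
      lra. }
  rewrite Hd, Hv1 in Hlub. destruct Hlub as [Hub _].
  intro z. destruct (Req_dec (vnorm z) 0) as [H0|H0].
  - apply vnorm_eq0 in H0. subst z. rewrite lf0 by exact Hl. rewrite Rabs_R0, norm0. lra.
  - pose proof (vnorm_ge0 _ z) as Hge.
    assert (Hp : 0 < vnorm z) by lra.
    assert (H1 : S (Rabs (f (vscal (/ vnorm z) z)))).
    { exists (vscal (/ vnorm z) z). split; [|reflexivity].
      rewrite vnorm_scal, Rabs_right.
      - rewrite Rinv_l by lra. lra.
      - left. apply Rinv_0_lt_compat. exact Hp. }
    apply Hub in H1. destruct Hl as [_ Hs]. rewrite Hs, Rabs_mult in H1.
    rewrite (Rabs_right (/ vnorm z)) in H1 by (left; apply Rinv_0_lt_compat; exact Hp).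
    apply (Rmult_le_compat_l (vnorm z)) in H1; [|lra].
    rewrite <- Rmult_assoc, Rinv_r in H1 by lra. lra.
Qed.

Lemma rho_lub {X : Banach} (v : X) t : vnorm v = 1 -> 0 <= t ->
  is_lub (rho_set X t) (rho X t).
Proof.
  intros Hv Ht. apply Rsup_lub.
  - exists ((vnorm (vadd v (vscal t v)) + vnorm (vsub v (vscal t v))) / 2 - 1).
    exists v, (vscal t v). repeat split; auto.
    rewrite vnorm_scal, Hv, Rabs_right by lra. ring.
  - exists t. intros s [x [y [Hx [Hy ->]]]].
    pose proof (vnorm_triangle _ x y). pose proof (norm_sub_le x y). lra.
Qed.

Lemma rho_ge0 {X : Banach} (v : X) t : vnorm v = 1 -> 0 <= t -> 0 <= rho X t.
Proof.
  intros Hv Ht. destruct (rho_lub v t Hv Ht) as [Hub _].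
  assert (H : rho_set X t ((vnorm (vadd v (vscal t v)) + vnorm (vsub v (vscal t v))) / 2 - 1)).
  { exists v, (vscal t v). repeat split; auto.
    rewrite vnorm_scal, Hv, Rabs_right by lra. ring. }
  apply Hub in H. eapply Rle_trans; [|exact H].
  rewrite <- (vscal1 _ v) at 1 3. rewrite <- vscalDl, sub_scal, !vnorm_scal, Hv.
  rewrite Rabs_right by lra.
  destruct (Rle_dec t 1).
  - rewrite Rabs_right by lra. lra.
  - rewrite Rabs_left by lra. lra.
Qed.

Lemma dist_approx {X : Banach} (x : X) (L : X -> Prop) r q : L q ->
  distL x L <= r -> forall eps, eps > 0 -> exists y, L y /\ vnorm (vsub x y) < r + eps.
Proof.
  intros Hq Hd eps He. unfold distL, Rinf in Hd.
  set (E := fun s : R => (fun s0 => exists y, L y /\ s0 = vnorm (vsub x y)) (- s)) in Hd.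
  assert (Hl : is_lub E (Rsup E)).
  { apply Rsup_lub.
    - exists (- vnorm (vsub x q)). exists q. split; auto. ring.
    - exists 0. intros s [y [_ Hy]]. pose proof (vnorm_ge0 _ (vsub x y)). lra. }
  destruct Hl as [Hub Hleast].
  apply NNPP. intro Hn.
  assert (Hb : is_upper_bound E (Rsup E - eps)).
  { intros s [y [Hy Hs]]. destruct (Rle_dec s (Rsup E - eps)) as [|Hc]; auto.
    exfalso. apply Hn. exists y. split; auto. lra. }
  apply Hleast in Hb. lra.
Qed.

Lemma le_eps (a b : R) : (forall eps, eps > 0 -> a <= b + eps) -> a <= b.
Proof.
  intros H. destruct (Rle_dec a b); auto.
  specialize (H ((a - b)/2)). lra.
Qed.

Lemma key {X : Banach} (v x : X) f tau : vnorm v = 1 -> is_duality_value v f ->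
  f x = 1 -> vnorm (vsub x v) <= tau / 2 -> 0 <= tau -> vnorm x <= 1 + rho X tau.
Proof.
  intros Hv Hd Hx Hm Ht.
  pose proof (rho_ge0 v tau Hv Ht) as Hr0.
  pose proof (dual_bound v f Hv Hd) as Hfb.
  destruct Hd as [Hl [_ [_ Hfv]]]. rewrite Hv in Hfv.
  set (u := vsub x v) in *.
  assert (Hxu : x = vadd v u) by (unfold u; symmetry; apply I1).
  assert (Hfu : f u = 0) by (unfold u; rewrite lf_sub by exact Hl; rewrite Hx, Hfv; ring).
  set (m := vnorm u) in *.
  pose proof (vnorm_ge0 _ u) as Hm0. fold m in Hm0.
  destruct (Req_dec m 0) as [H0|H0].
  - apply vnorm_eq0 in H0. rewrite Hxu, H0, vadd0, Hv. lra.
  - assert (Hmp : 0 < m) by lra.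
    assert (Htp : 0 < tau) by lra.
    set (l := m / tau).
    assert (Hl0 : 0 < l) by (unfold l; apply Rdiv_lt_0_compat; lra).
    assert (Hl1 : 2 * l <= 1).
    { unfold l. apply (Rmult_le_reg_r tau); [lra|]. field_simplify; lra. }
    set (y := vscal (/ l) u).
    assert (Hy : vnorm y = tau).
    { unfold y. rewrite vnorm_scal, Rabs_right.
      - fold m. unfold l. field. lra.
      - left. apply Rinv_0_lt_compat. lra. }
    assert (Hly : vscal l y = u).
    { unfold y. rewrite vscalA, Rinv_r by lra. apply vscal1. }
    destruct (rho_lub v tau Hv Ht) as [Hub _].
    assert (Hel : rho_set X tau ((vnorm (vadd v y) + vnorm (vsub v y)) / 2 - 1)).
    { exists v, y. repeat split; auto. }
    apply Hub in Hel.
    assert (H1 : vnorm x <= (1 - l) + l * vnorm (vadd v y)).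
    { rewrite Hxu, <- Hly, I2. eapply Rle_trans; [apply vnorm_triangle|].
      rewrite !vnorm_scal, Hv, !Rabs_right by lra. lra. }
    assert (H2 : vnorm (vsub v u) <= (1 - l) + l * vnorm (vsub v y)).
    { unfold vsub. rewrite <- Hly, opp_scal, vscalA, Rmult_comm, <- vscalA, I2.
      eapply Rle_trans; [apply vnorm_triangle|].
      rewrite !vnorm_scal, Hv, !Rabs_right by lra. rewrite <- opp_scal. lra. }
    assert (H3 : 1 <= vnorm (vsub v u)).
    { specialize (Hfb (vsub v u)). rewrite lf_sub, Hfv, Hfu in Hfb by exact Hl.
      replace (1 ^ 2 - 0) with 1 in Hfb by ring. rewrite Rabs_R1 in Hfb; exact Hfb. }
    nra.
Qed.

Definition P {X : Banach} (f : X -> R) (v z : X) := vsub z (vscal (f z) v).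

Lemma P_add {X : Banach} (f : X -> R) v a b : linear_functional f ->
  P f v (vadd a b) = vadd (P f v a) (P f v b).
Proof.
  intros [Ha _]. unfold P, vsub. rewrite Ha, vscalDl, opp_add, vadd_swap. reflexivity.
Qed.

Lemma P_opp {X : Banach} (f : X -> R) v a : linear_functional f ->
  P f v (vopp a) = vopp (P f v a).
Proof.
  intros Hl. unfold P, vsub. rewrite lf_opp by exact Hl. rewrite opp_add.
  f_equal. rewrite !opp_scal, !vscalA. f_equal. ring.
Qed.

Lemma P_line {X : Banach} (f : X -> R) (v q : X) t : linear_functional f -> f v = 1 ->
  P f v (vadd q (vscal t v)) = P f v q.
Proof.
  intros Hl Hv. rewrite P_add by exact Hl.
  assert (H : P f v (vscal t v) = vzero).
  { unfold P. destruct Hl as [_ Hs]. rewrite Hs, Hv, Rmult_1_r, sub_scal.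
    replace (t - t) with 0 by ring. apply scal0. }
  rewrite H, vadd0. reflexivity.
Qed.

Lemma P_bound {X : Banach} (f : X -> R) (v e : X) : vnorm v = 1 ->
  (forall z, Rabs (f z) <= vnorm z) -> vnorm (P f v e) <= 2 * vnorm e.
Proof.
  intros Hv Hb. unfold P. eapply Rle_trans; [apply norm_sub_le|].
  rewrite vnorm_scal, Hv. specialize (Hb e). lra.
Qed.

Theorem mainTheorem14 (X : Banach) (delta alpha : R) (V L : X -> Prop) :
  uniformly_smooth X ->
  delta > 0 ->
  separated delta V ->
  (exists a b, V a /\ V b /\ a <> b) ->
  is_line L ->
  0 <= alpha <= 43 / 1224 ->
  (forall x, V x -> distL x L <= alpha * delta) ->
  forall (q v : X) (f : X -> R),
    L q -> vnorm v = 1 ->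
    (forall x, L x <-> exists t : R, x = vadd q (vscal t v)) ->
    is_duality_value v f ->
    forall v1 v2, V v1 -> V v2 ->
      vnorm (vsub (Jproj q v f v1) (Jproj q v f v2)) <= vnorm (vsub v1 v2) /\
      vnorm (vsub v1 v2) <=
        (1 + rho X (102 * alpha)) * vnorm (vsub (Jproj q v f v1) (Jproj q v f v2)).
Proof.
  intros _ Hdel Hsep _ _ Hal Hdist q v f Hq Hv HL Hd v1 v2 Hv1 Hv2.
  pose proof (dual_bound v f Hv Hd) as Hfb.
  pose proof Hd as [Hl [_ [_ Hfv]]]. rewrite Hv in Hfv. replace (1 ^ 2) with 1 in Hfv by ring.
  set (w := vsub v1 v2).
  set (c := f w).
  assert (HJ : vsub (Jproj q v f v1) (Jproj q v f v2) = vscal c v).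
  { unfold Jproj. unfold vsub at 1. rewrite G1. fold (vsub (vscal (f (vsub v1 q)) v) (vscal (f (vsub v2 q)) v)).
    rewrite sub_scal. f_equal. unfold c, w. rewrite !lf_sub by exact Hl. ring. }
  rewrite HJ, vnorm_scal, Hv, Rmult_1_r.
  split; [apply Hfb|].
  assert (Htau : 0 <= 102 * alpha) by lra.
  pose proof (rho_ge0 v _ Hv Htau) as Hr0.
  destruct (classic (v1 = v2)) as [Heq|Hne].
  { unfold w. rewrite Heq. unfold vsub. rewrite vaddN, norm0.
    pose proof (Rabs_pos c). nra. }
  pose proof (Hsep v1 v2 Hv1 Hv2 Hne) as Hwd. fold w in Hwd.
  assert (HPw : vnorm (P f v w) <= 4 * (alpha * delta)).
  { apply le_eps. intros eps He.
    destruct (dist_approx v1 L _ q Hq (Hdist v1 Hv1) (eps/4)) as [y1 [Hy1 Hn1]]; [lra|].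
    destruct (dist_approx v2 L _ q Hq (Hdist v2 Hv2) (eps/4)) as [y2 [Hy2 Hn2]]; [lra|].
    apply HL in Hy1 as [t1 Ht1]. apply HL in Hy2 as [t2 Ht2].
    assert (HPv : forall (vi yi : X) ti, yi = vadd q (vscal ti v) ->
              P f v vi = vadd (P f v q) (P f v (vsub vi yi))).
    { intros vi yi ti Hyi. rewrite <- (I1 vi yi) at 1. rewrite P_add by exact Hl.
      rewrite Hyi at 1. rewrite P_line by assumption. reflexivity. }
    assert (Hw : P f v w = vadd (P f v (vsub v1 y1)) (vopp (P f v (vsub v2 y2)))).
    { unfold w. unfold vsub at 1. rewrite P_add, P_opp by exact Hl.
      rewrite (HPv v1 y1 t1 Ht1), (HPv v2 y2 t2 Ht2), G1. reflexivity. }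
    rewrite Hw. eapply Rle_trans; [apply vnorm_triangle|]. rewrite norm_opp.
    pose proof (P_bound f v (vsub v1 y1) Hv Hfb).
    pose proof (P_bound f v (vsub v2 y2) Hv Hfb). lra. }
  assert (Hwc : vnorm w <= vnorm (P f v w) + Rabs c).
  { rewrite (I4 w (vscal c v)) at 1. eapply Rle_trans; [apply vnorm_triangle|].
    rewrite vnorm_scal, Hv. unfold P. fold c. lra. }
  assert (Hc : delta - 4 * (alpha * delta) <= Rabs c) by lra.
  assert (Hcp : 0 < Rabs c).
  { assert (0 < delta * (1 - 4 * alpha)) by (apply Rmult_lt_0_compat; lra). lra. }
  assert (Hc0 : c <> 0) by (intro H0; rewrite H0, Rabs_R0 in Hcp; lra).
  set (x := vscal (/ c) w).
  assert (Hfx : f x = 1).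
  { unfold x. destruct Hl as [_ Hs]. rewrite Hs. fold c. field. exact Hc0. }
  assert (Hxv : vsub x v = vscal (/ c) (P f v w)).
  { unfold x, P, vsub. fold c. rewrite vscalDr, !opp_scal, !vscalA. f_equal. f_equal. field. exact Hc0. }
  assert (Hxn : vnorm (vsub x v) <= 102 * alpha / 2).
  { rewrite Hxv, vnorm_scal, Rabs_inv.
    apply (Rmult_le_reg_l (Rabs c)); [exact Hcp|].
    rewrite <- Rmult_assoc, Rinv_r by lra.
    assert (0 <= delta * (47 - 204 * alpha)) by (apply Rmult_le_pos; lra).
    assert (0 <= alpha * (51 * Rabs c - 4 * delta)) by (apply Rmult_le_pos; lra). lra. }
  pose proof (key v x f _ Hv Hd Hfx Hxn Htau) as Hk.
  assert (Hwx : w = vscal c x).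
  { unfold x. rewrite vscalA, Rinv_r by exact Hc0. symmetry. apply vscal1. }
  rewrite Hwx at 1. rewrite vnorm_scal.
  rewrite (Rmult_comm (1 + _)). apply Rmult_le_compat_l; [apply Rabs_pos|exact Hk].
Qed.
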